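(* For every $n\ge3$, the function $g_n(x_1,\ldots,x_n)=x_1x_2\vee x_1x_3\vee\cdots\vee x_1x_n\vee x_2x_3\cdots x_n$ is a positive threshold function depending on all its variables, it is not linear read-once, and its specification number in $\mathcal{H}_n$ is $\sigma_{\mathcal{H}_n}(g_n)=2n$.
   Context: $f$ on $\{0,1\}^n$ is positive if $f(\mathbf{x})=1$ and $\mathbf{x}\le\mathbf{y}$ coordinatewise imply $f(\mathbf{y})=1$. $f$ is a threshold function if there are $w_1,\ldots,w_n,t\in\mathbb{R}$ with $f(\mathbf{x})=0\iff\sum_i w_ix_i\le t$. $\mathcal{H}_n$ is the class of threshold functions of $n$ variables. A set $S\subseteq\{0,1\}^n$ specifies $f\in\mathcal{H}_n$ if $f$ is the only function in $\mathcal{H}_n$ agreeing with $f$ on $S$; $\sigma_{\mathcal{H}_n}(f)$ is the minimum size of such a set. Linear read-once (lro): constant or representable by a nested formula (literals are nested; $x\vee t$, $x\wedge t$, $\overline{x}\vee t$, $\overline{x}\wedge t$ are nested when $t$ is nested and contains neither $x$ nor $\overline{x}$). *)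

(* Defs.v *)
From Stdlib Require Import Reals.
From mathcomp Require Import all_boot.
Set Implicit Arguments. Unset Strict Implicit. Unset Printing Implicit Defensive.

(* Points of {0,1}^n : finite functions 'I_n -> bool; variable x_{k+1} is index k. *)
Definition point (n : nat) := {ffun 'I_n -> bool}.
Definition bfun (n : nat) := point n -> bool.

Definition b2R (b : bool) : R := if b then R1 else R0.

Definition positive_fun n (f : bfun n) : Prop :=
  forall x y : point n, f x = true -> (forall i, x i <= y i) -> f y = true.

Definition threshold n (f : bfun n) : Prop :=
  exists (w : 'I_n -> R) (t : R), forall x : point n,
    f x = false <-> Rle (\big[Rplus/R0]_(i < n) Rmult (w i) (b2R (x i))) t.

Definition flip n (x : point n) (i : 'I_n) : point n :=
  [ffun j => if j == i then ~~ x j else x j].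

Definition depends_on_all n (f : bfun n) : Prop :=
  forall i : 'I_n, exists x : point n, f x <> f (flip x i).

(* Nested formulas: literal (i, b) is x_i if b, negated x_i otherwise. *)
Inductive nform (n : nat) : Type :=
  | NLit : 'I_n -> bool -> nform n
  | NOr  : 'I_n -> bool -> nform n -> nform n
  | NAnd : 'I_n -> bool -> nform n -> nform n.

Fixpoint nvars n (t : nform n) : seq 'I_n :=
  match t with
  | NLit i _ => [:: i]
  | NOr i _ t' => i :: nvars t'
  | NAnd i _ t' => i :: nvars t'
  end.

Fixpoint nested n (t : nform n) : Prop :=
  match t with
  | NLit _ _ => True
  | NOr i _ t' => i \notin nvars t' /\ nested t'
  | NAnd i _ t' => i \notin nvars t' /\ nested t'
  end.

Definition lit n (i : 'I_n) (b : bool) (x : point n) : bool :=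
  if b then x i else ~~ x i.

Fixpoint neval n (t : nform n) (x : point n) : bool :=
  match t with
  | NLit i b => lit i b x
  | NOr i b t' => lit i b x || neval t' x
  | NAnd i b t' => lit i b x && neval t' x
  end.

Definition lro n (f : bfun n) : Prop :=
  (exists c : bool, forall x, f x = c) \/
  (exists t : nform n, nested t /\ forall x, f x = neval t x).

Definition specifies n (S : {set point n}) (f : bfun n) : Prop :=
  threshold f /\
  forall h : bfun n, threshold h -> (forall x, x \in S -> h x = f x) ->
    forall x, h x = f x.

Definition spec_number_eq n (f : bfun n) (k : nat) : Prop :=
  (exists S : {set point n}, specifies S f /\ #|S| = k) /\
  (forall S : {set point n}, specifies S f -> k <= #|S|).

(* g_n = x1x2 ∨ x1x3 ∨ ... ∨ x1xn ∨ x2x3...xn  (x1 is index 0) *)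
Definition g n : bfun n := fun x =>
  [exists i : 'I_n, exists j : 'I_n,
     [&& val i == 0, val j != 0, x i & x j]]
  || [forall j : 'I_n, (val j != 0) ==> x j].

(* Main.v *)
From HB Require Import structures.
Require Import Defs.
From Stdlib Require Import Reals Lia Lra.
From mathcomp Require Import all_boot zify.
Set Implicit Arguments. Unset Strict Implicit. Unset Printing Implicit Defensive.

Lemma Rplus_assoc' : associative Rplus. Proof. by move=> a b c; rewrite Rplus_assoc. Qed.
HB.instance Definition _ := Monoid.isComLaw.Build R R0 Rplus Rplus_assoc' Rplus_comm Rplus_0_l.

Definition others n (z j : 'I_n) := fun i : 'I_n => (i != z) && (i != j).
Definition K n (z j : 'I_n) (y : point n) : nat := \sum_(i | others z j i) (y i : nat).
Definition NN n (z j : 'I_n) : nat := \sum_(i | others z j i) 1.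

Lemma sumINR n (w : 'I_n -> nat) (x : point n) :
  \big[Rplus/R0]_(i < n) Rmult (INR (w i)) (b2R (x i)) = INR (\sum_(i < n) w i * x i).
Proof.
rewrite (big_morph INR (id1 := R0) (op1 := Rplus)); last by []; last first.
  by move=> a b; rewrite -plus_INR.
apply: eq_bigr => i _; rewrite mult_INR; case: (x i) => /=; rewrite ?muln1 ?muln0 /=; lra.
Qed.

Lemma sum_decomp n (z j : 'I_n) (hzj : z != j) (a b c : nat) (y : point n) :
  \sum_(i < n) (if i == z then a else if i == j then b else c) * y i
  = a * y z + b * y j + c * K z j y.
Proof.
rewrite (bigD1 z) //= eqxx (bigD1 j) /=; last by rewrite eq_sym.
rewrite (negbTE (negbT (introF eqP _))) ?eq_sym ?(negbTE hzj) //; last first.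
  by move=> e; move: hzj; rewrite e eqxx.
rewrite addnA; congr (_ + _); first by rewrite eqxx.
rewrite /K /others.
have -> : forall (P : pred 'I_n) F, c * (\sum_(i | P i) F i) = \sum_(i | P i) c * F i.
  by move=> P F; apply: (big_morph (fun s => c * s)) => [u v|]; rewrite ?mulnDr ?muln0.
apply: eq_bigr => i /andP [h1 h2]; by rewrite (negbTE h1) (negbTE h2).
Qed.

Lemma K_le n (z j : 'I_n) y : K z j y <= NN z j.
Proof. by apply: leq_sum => i _; case: (y i). Qed.

Lemma K_eq0 n (z j : 'I_n) y :
  (K z j y == 0) = [forall i, others z j i ==> ~~ y i].
Proof.
rewrite /K sum_nat_eq0; apply/forallP/forallP => h i; move: (h i);
  by case: (others z j i); case: (y i).
Qed.

Lemma K_eqN n (z j : 'I_n) y :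
  (K z j y == NN z j) = [forall i, others z j i ==> y i].
Proof.
apply/eqP/forallP => [h i|h].
  apply/implyP => oi; apply/negPn/negP => yi.
  move: h; rewrite /K /NN (bigD1 i) //= [X in _ = X](bigD1 i) //= (negbTE yi) /= add0n.
  move=> e; have : \sum_(i0 | others z j i0 && (i0 != i)) (y i0 : nat)
     <= \sum_(i0 | others z j i0 && (i0 != i)) 1 by apply: leq_sum => k _; case: (y k).
  by rewrite e add1n ltnn.
rewrite /K /NN; apply: eq_bigr => i oi; by move: (h i); rewrite oi => /= ->.
Qed.

Lemma NN_pos n (z j k : 'I_n) : others z j k -> 0 < NN z j.
Proof. by move=> ok; rewrite /NN (bigD1 k). Qed.

Lemma thr_nat n (f : bfun n) (z j : 'I_n) (hzj : z != j) (a b c t : nat)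
  (P : bool -> bool -> nat -> bool) :
  (forall y, f y = P (y z) (y j) (K z j y)) ->
  (forall bz bj k, k <= NN z j -> (P bz bj k = false <-> a * bz + b * bj + c * k <= t)) ->
  threshold f.
Proof.
move=> hf hP.
exists (fun i => INR (if i == z then a else if i == j then b else c)), (INR t) => x.
rewrite sumINR sum_decomp // hf hP ?K_le //; split => h.
  by apply: le_INR; apply/leP.
by apply/leP; apply: INR_le.
Qed.

Definition G (N : nat) (bz bj : bool) (k : nat) : bool :=
  bz && (bj || (0 < k)) || bj && (k == N).

Lemma gchar n (z j : 'I_n) (hz : val z = 0) (hj : val j != 0) y :
  g y = G (NN z j) (y z) (y j) (K z j y).
Proof.
have zE : forall i : 'I_n, (val i == 0) = (i == z).
  move=> i; apply/eqP/eqP => [h|->] //; by apply: val_inj; rewrite /= h hz.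
have hzj : z != j by apply/eqP => e; move: hj; rewrite -e hz.
rewrite /g /G lt0n K_eq0 K_eqN; congr orb.
  apply/existsP/idP => [[i /existsP [j' /and4P [i0 j'0 yi yj']]]|].
    move: i0; rewrite zE => /eqP ei; subst i; rewrite yi /=.
    case yj: (y j) => //=; apply/negP => /forallP h; move: (h j').
    rewrite /others -zE j'0 yj' /= implybF => /negP; apply.
    by apply/eqP => e; subst j'; rewrite yj in yj'.
  move=> /andP [yz]; case yj: (y j) => /=.
    move=> _; exists z; apply/existsP; exists j; by rewrite zE eqxx hj yz yj.
  move=> /forallPn [k]; rewrite negb_imply negbK => /andP [/andP [kz kj] yk].
  exists z; apply/existsP; exists k; by rewrite zE eqxx yz yk zE kz.
apply/forallP/andP => [h|[yj /forallP h] i].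
  split; first by move: (h j); rewrite hj.
  apply/forallP => i; apply/implyP => /andP [iz _]; move: (h i); by rewrite zE iz.
apply/implyP; rewrite zE => iz; case e: (i == j); first by rewrite (eqP e).
by move: (h i); rewrite /others iz e.
Qed.

Definition Tp n (z i : 'I_n) : point n :=
  [ffun k => if i == z then k != z else (k == z) || (k == i)].
Definition Fp n (z i : 'I_n) : point n :=
  [ffun k => if i == z then k == z else (k != z) && (k != i)].

Lemma g_true n (z : 'I_n) (hz : val z = 0) y :
  g y -> exists i, forall k, Tp z i k ==> y k.
Proof.
have zE : forall i : 'I_n, (val i == 0) = (i == z).
  move=> i; apply/eqP/eqP => [h|->] //; by apply: val_inj; rewrite /= h hz.
case/orP => [/existsP [i /existsP [j' /and4P [i0 j'0 yi yj']]]|/forallP h].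
  move: i0; rewrite zE => /eqP ei; subst i.
  exists j' => k; rewrite /Tp ffunE -zE (negbTE j'0).
  by apply/implyP => /orP [] /eqP ->.
exists z => k; rewrite /Tp ffunE eqxx; apply/implyP => kz.
by move: (h k); rewrite zE kz.
Qed.

Lemma g_false n (z : 'I_n) (hz : val z = 0) y :
  ~~ g y -> exists i, forall k, y k ==> Fp z i k.
Proof.
have zE : forall i : 'I_n, (val i == 0) = (i == z).
  move=> i; apply/eqP/eqP => [h|->] //; by apply: val_inj; rewrite /= h hz.
rewrite /g negb_or => /andP [/existsPn h1 /forallPn [j' ]].
rewrite negb_imply => /andP [j'0 yj'].
case yz: (y z).
  exists z => k; rewrite /Fp ffunE eqxx; apply/implyP => yk.
  apply/negPn/negP => kz; move: (h1 z) => /existsPn /(_ k).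
  by rewrite !zE eqxx kz yz yk.
exists j' => k; rewrite /Fp ffunE -zE (negbTE j'0); apply/implyP => yk.
rewrite -zE; apply/andP; split.
  apply/negP => /eqP e; have kz : k = z by apply: val_inj; rewrite /= e hz.
  by move: yz; rewrite -kz yk.
by apply/negP => /eqP e; subst k; rewrite yk in yj'.
Qed.

Definition sw n (w : 'I_n -> R) (x : point n) : R :=
  \big[Rplus/R0]_(i < n) Rmult (w i) (b2R (x i)).

Lemma smono n (w : 'I_n -> R) (x y : point n) :
  (forall i, x i ==> y i) -> (forall i, y i -> ~~ x i -> Rle 0 (w i)) ->
  Rle (sw w x) (sw w y).
Proof.
move=> hxy hw; rewrite /sw; apply: (big_ind2 (fun a b => Rle a b)).
- by apply: Rle_refl.
- by move=> ? ? ? ? ? ?; apply: Rplus_le_compat.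
move=> i _; move: (hxy i) (hw i); case: (x i); case: (y i) => //= _ h.
- by apply: Rle_refl.
- by rewrite Rmult_0_r Rmult_1_r; apply: h.
- by apply: Rle_refl.
Qed.

Lemma sadd n (w : 'I_n -> R) (x y u v : point n) :
  (forall i, (x i : nat) + y i = u i + v i) ->
  Rplus (sw w x) (sw w y) = Rplus (sw w u) (sw w v).
Proof.
move=> h; rewrite /sw -!big_split /=; apply: eq_bigr => i _.
move: (h i); case: (x i); case: (y i); case: (u i); case: (v i) => //= _; lra.
Qed.

Lemma sone n (w : 'I_n -> R) (j : 'I_n) : sw w [ffun k => k == j] = w j.
Proof.
rewrite /sw (bigD1 j) //= ffunE eqxx /= big1 /=; first by lra.
by move=> i ij; rewrite ffunE (negbTE ij) /=; lra.
Qed.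

Lemma szero n (w : 'I_n -> R) : sw w [ffun k => false] = R0.
Proof. by rewrite /sw big1 // => i _; rewrite ffunE /=; lra. Qed.

Lemma neq_val n (a b : 'I_n) : val a <> val b -> a != b.
Proof. by move=> h; apply/eqP => e; apply: h; rewrite e. Qed.

Lemma suff_spec n (z j1 j2 : 'I_n) (hz : val z = 0) (h1 : val j1 = 1) (h2 : val j2 = 2)
  (h : bfun n) :
  threshold h -> (forall i, h (Tp z i) = true) -> (forall i, h (Fp z i) = false) ->
  forall y, h y = g y.
Proof.
case=> w [t hw] hT' hF'.
have hT : forall x, h x = true -> Rlt t (sw w x).
  move=> x hx; apply: Rnot_le_lt => hle; by rewrite (proj2 (hw x) hle) in hx.
have hF : forall x, h x = false -> Rle (sw w x) t by move=> x hx; exact: (proj1 (hw x) hx).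
have zj1 : z != j1 by apply: neq_val; rewrite hz h1.
have zj2 : z != j2 by apply: neq_val; rewrite hz h2.
have j12 : j1 != j2 by apply: neq_val; rewrite h1 h2.
have j1z : j1 != z by rewrite eq_sym.
have j2z : j2 != z by rewrite eq_sym.
have wpos : forall j, j != z -> Rlt 0 (w j).
  move=> j jz.
  have pw : forall i, (Tp z z i : nat) + [ffun k : 'I_n => false] i
                      = Fp z j i + [ffun k => k == j] i.
    move=> i; rewrite /Tp /Fp !ffunE eqxx (negbTE jz).
    by case: (eqVneq i j) => [->|ij]; rewrite ?jz ?andbF ?andbT.
  have e := sadd w pw.
  rewrite szero sone in e.
  have := hT _ (hT' z); have := hF _ (hF' j); lra.
have wz : Rle 0 (w z).
  have pw : forall i, (Tp z j1 i : nat) + [ffun k : 'I_n => false] i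
                      = [ffun k => k == z] i + [ffun k => k == j1] i.
    move=> i; rewrite /Tp !ffunE (negbTE j1z) /=.
    case: (eqVneq i z) => [->|iz]; first by rewrite (negbTE zj1).
    by rewrite addn0.
  have e := sadd w pw.
  rewrite szero !sone in e.
  have := hT _ (hT' j1); have := hF _ (hF' j2).
  have H := @smono n w [ffun k => k == j1] (Fp z j2).
  rewrite sone in H.
  have H' : Rle (w j1) (sw w (Fp z j2)).
    apply: H.
    + move=> i; rewrite /Fp !ffunE (negbTE j2z); apply/implyP => /eqP ->.
      by rewrite j1z j12.
    + move=> i; rewrite /Fp !ffunE (negbTE j2z) => /andP [iz _] _.
      by apply: Rlt_le; apply: wpos.
  lra.
have wall : forall i, Rle 0 (w i).
  move=> i; case: (eqVneq i z) => [->//|iz]; by apply: Rlt_le; apply: wpos.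
move=> y; case gy: (g y).
  have [i hi] := g_true hz gy.
  have := @smono n w (Tp z i) y hi (fun k _ _ => wall k).
  have := hT _ (hT' i).
  case hy: (h y) => //; have := hF _ hy; lra.
have [i hi] := g_false hz (negbT gy).
have := @smono n w y (Fp z i) hi (fun k _ _ => wall k).
have := hF _ (hF' i).
case hy: (h y) => //; have := hT _ hy; lra.
Qed.
Lemma ar1 : forall N bz bj k, 0 < N -> k <= N ->
  (G N bz bj k = false <-> N * bz + 1 * bj + 1 * k <= N).
Proof. rewrite /G; move=> N bz bj k hN hk;
  case: bz; case: bj; case: (posnP k) => [->|kp]; rewrite ?kp ?(gtn_eqF kp) /=;
  case: (eqVneq k N) => [e|kN]; try subst; rewrite /= ?eqxx ?(negbTE kN) /=; split => // ; lia. Qed.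
Lemma ar2 : forall N bz bj k, 0 < N -> k <= N ->
  (addb (G N bz bj k) (bz && ~~ bj && (k == 0)) = false <-> (N+1) * bz + 1 * bj + 1 * k <= N).
Proof. rewrite /G; move=> N bz bj k hN hk;
  case: bz; case: bj; case: (posnP k) => [->|kp]; rewrite ?kp ?(gtn_eqF kp) /=;
  case: (eqVneq k N) => [e|kN]; try subst; rewrite /= ?eqxx ?(negbTE kN) /=; split => // ; lia. Qed.
Lemma ar3 : forall N bz bj k, 0 < N -> k <= N ->
  (addb (G N bz bj k) (~~ bz && bj && (k == N)) = false <-> (N+1) * bz + 1 * bj + 1 * k <= N + 1).
Proof. rewrite /G; move=> N bz bj k hN hk;
  case: bz; case: bj; case: (posnP k) => [->|kp]; rewrite ?kp ?(gtn_eqF kp) /=;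
  case: (eqVneq k N) => [e|kN]; try subst; rewrite /= ?eqxx ?(negbTE kN) /=; split => // ; lia. Qed.
Lemma ar4 : forall N bz bj k, 0 < N -> k <= N ->
  (addb (G N bz bj k) (~~ bz && ~~ bj && (k == N)) = false <-> (2*N-1) * bz + 1 * bj + 2 * k <= 2*N-1).
Proof. rewrite /G; move=> N bz bj k hN hk;
  case: bz; case: bj; case: (posnP k) => [->|kp]; rewrite ?kp ?(gtn_eqF kp) /=;
  case: (eqVneq k N) => [e|kN]; try subst; rewrite /= ?eqxx ?(negbTE kN) /=; split => // ; lia. Qed.
Lemma ar5 : forall N bz bj k, 0 < N -> k <= N ->
  (addb (G N bz bj k) (bz && bj && (k == 0)) = false <-> (2*N-1) * bz + 1 * bj + 2 * k <= 2*N).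
Proof. rewrite /G; move=> N bz bj k hN hk;
  case: bz; case: bj; case: (posnP k) => [->|kp]; rewrite ?kp ?(gtn_eqF kp) /=;
  case: (eqVneq k N) => [e|kN]; try subst; rewrite /= ?eqxx ?(negbTE kN) /=; split => // ; lia. Qed.

Lemma eq_pt_T n (z j : 'I_n) (p y : point n) :
  (forall i, others z j i -> p i = true) ->
  (y == p) = (y z == p z) && (y j == p j) && (K z j y == NN z j).
Proof.
move=> hp; rewrite K_eqN; apply/eqP/idP => [->|].
  rewrite !eqxx; apply/forallP => i; apply/implyP => oi; by rewrite hp.
move/andP => [/andP [/eqP yz /eqP yj] /forallP ha]; apply/ffunP => i.
case: (eqVneq i z) => [->//|iz]; case: (eqVneq i j) => [->//|ij].
have oi : others z j i by rewrite /others iz ij.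
by rewrite hp //; move: (ha i); rewrite oi.
Qed.

Lemma eq_pt_F n (z j : 'I_n) (p y : point n) :
  (forall i, others z j i -> p i = false) ->
  (y == p) = (y z == p z) && (y j == p j) && (K z j y == 0).
Proof.
move=> hp; rewrite K_eq0; apply/eqP/idP => [->|].
  rewrite !eqxx; apply/forallP => i; apply/implyP => oi; by rewrite hp.
move/andP => [/andP [/eqP yz /eqP yj] /forallP ha]; apply/ffunP => i.
case: (eqVneq i z) => [->//|iz]; case: (eqVneq i j) => [->//|ij].
have oi : others z j i by rewrite /others iz ij.
by rewrite hp //; move: (ha i); rewrite oi /= => /negbTE.
Qed.

Definition hfun n (p : point n) : bfun n := fun y => addb (g y) (y == p).

Lemma third n (z j1 j2 j : 'I_n) (hz : val z = 0) (h1 : val j1 = 1) (h2 : val j2 = 2) :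
  j != z -> exists k, others z j k.
Proof.
move=> jz; case: (eqVneq j j1) => [->|jj1].
  exists j2; rewrite /others; apply/andP; split; apply: neq_val; by rewrite ?hz ?h1 h2.
exists j1; rewrite /others (eq_sym j1 j) jj1 andbT; apply: neq_val; by rewrite hz h1.
Qed.

Lemma thr_cases n (z j1 j2 : 'I_n) (hz : val z = 0) (h1 : val j1 = 1) (h2 : val j2 = 2) :
  threshold (@g n) /\ threshold (hfun (Fp z z)) /\ threshold (hfun (Tp z z)) /\
  (forall i, i != z -> threshold (hfun (Fp z i)) /\ threshold (hfun (Tp z i))).
Proof.
have hj1 : val j1 != 0 by rewrite h1.
have zj1 : z != j1 by apply: neq_val; rewrite hz h1.
have j1z : j1 != z by rewrite eq_sym.
have [k ok] := third hz h1 h2 j1z.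
have hN := NN_pos ok.
split; [|split; [|split]].
- apply: (@thr_nat n _ z j1 zj1 (NN z j1) 1 1 (NN z j1) (G (NN z j1))).
    by move=> y; rewrite (gchar hz hj1).
  by move=> bz bj k0 hk; exact: ar1.
- apply: (@thr_nat n _ z j1 zj1 (NN z j1 + 1) 1 1 (NN z j1)
     (fun bz bj k => addb (G (NN z j1) bz bj k) (bz && ~~ bj && (k == 0)))).
    move=> y; rewrite /hfun (gchar hz hj1) (@eq_pt_F n z j1).
      by rewrite /Fp !ffunE eqxx (negbTE j1z) eqb_id eqbF_neg.
    by move=> i /andP [iz _]; rewrite /Fp ffunE eqxx (negbTE iz).
  by move=> bz bj k0 hk; exact: ar2.
- apply: (@thr_nat n _ z j1 zj1 (NN z j1 + 1) 1 1 (NN z j1 + 1)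
     (fun bz bj k => addb (G (NN z j1) bz bj k) (~~ bz && bj && (k == NN z j1)))).
    move=> y; rewrite /hfun (gchar hz hj1) (@eq_pt_T n z j1).
      by rewrite /Tp !ffunE eqxx j1z eqb_id eqbF_neg.
    by move=> i /andP [iz _]; rewrite /Tp ffunE eqxx iz.
  by move=> bz bj k0 hk; exact: ar3.
move=> i iz.
have hi : val i != 0 by apply/eqP => e; move: iz; rewrite (@val_inj _ _ _ i z) ?eqxx //= e hz.
have zi : z != i by rewrite eq_sym.
have [k' ok'] := third hz h1 h2 iz.
have hN' := NN_pos ok'.
split.
- apply: (@thr_nat n _ z i zi (2 * NN z i - 1) 1 2 (2 * NN z i - 1)
     (fun bz bj k => addb (G (NN z i) bz bj k) (~~ bz && ~~ bj && (k == NN z i)))).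
    move=> y; rewrite /hfun (gchar hz hi) (@eq_pt_T n z i).
      by rewrite /Fp !ffunE (negbTE iz) eqxx eqxx /= !eqbF_neg.
    by move=> i0 /andP [i0z i0i]; rewrite /Fp ffunE (negbTE iz) i0z i0i.
  by move=> bz bj k0 hk; exact: ar4.
- apply: (@thr_nat n _ z i zi (2 * NN z i - 1) 1 2 (2 * NN z i)
     (fun bz bj k => addb (G (NN z i) bz bj k) (bz && bj && (k == 0)))).
    move=> y; rewrite /hfun (gchar hz hi) (@eq_pt_F n z i).
      by rewrite /Tp !ffunE (negbTE iz) !eqxx /= ?orbT !eqb_id.
    by move=> i0 /andP [i0z i0i]; rewrite /Tp ffunE (negbTE iz) (negbTE i0z) (negbTE i0i).
  by move=> bz bj k0 hk; exact: ar5.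
Qed.

Lemma zE n (z : 'I_n) (hz : val z = 0) (i : 'I_n) : (val i == 0) = (i == z).
Proof. apply/eqP/eqP => [h|->] //; by apply: val_inj; rewrite /= h hz. Qed.

Lemma gT_le n (z : 'I_n) (hz : val z = 0) (i : 'I_n) (y : point n) :
  (forall k, Tp z i k ==> y k) -> g y.
Proof.
move=> h; rewrite /g; case: (eqVneq i z) => [e|iz].
  apply/orP; right; apply/forallP => k; apply/implyP; rewrite (zE hz) => kz.
  by move: (h k); rewrite /Tp ffunE e eqxx kz.
apply/orP; left; apply/existsP; exists z; apply/existsP; exists i.
rewrite !(zE hz) eqxx iz /=.
move: (h z) (h i); rewrite /Tp !ffunE (negbTE iz) !eqxx /= ?orbT => -> ->.
by [].
Qed.

Lemma gT n (z : 'I_n) (hz : val z = 0) i : g (Tp z i).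
Proof. by apply: (gT_le hz (i := i)) => k; apply/implyP. Qed.

Lemma gF n (z j1 : 'I_n) (hz : val z = 0) (h1 : val j1 = 1) i :
  g (Fp z i) = false.
Proof.
have hj1 : val j1 != 0 by rewrite h1.
have j1z : j1 != z by apply: neq_val; rewrite hz h1.
case: (eqVneq i z) => [->|iz].
  rewrite (gchar hz hj1) /Fp !ffunE eqxx (negbTE j1z) /G /=.
  suff -> : K z j1 [ffun k => k == z] = 0 by [].
  apply/eqP; rewrite K_eq0; apply/forallP => k; apply/implyP => /andP [kz _].
  by rewrite ffunE (negbTE kz).
have hi : val i != 0 by rewrite (zE hz).
by rewrite (gchar hz hi) /Fp !ffunE (negbTE iz) eqxx /G /= eqxx.
Qed.

Lemma g_pos n (z : 'I_n) (hz : val z = 0) : positive_fun (@g n).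
Proof.
move=> x y gx hxy; have [i hi] := g_true hz gx.
apply: (gT_le hz (i := i)) => k; apply/implyP => tk.
by move: (hi k); rewrite tk /= => xk; move: (hxy k); rewrite xk; case: (y k).
Qed.

Lemma g_dep n (z j1 j2 : 'I_n) (hz : val z = 0) (h1 : val j1 = 1) (h2 : val j2 = 2) :
  depends_on_all (@g n).
Proof.
have j1z : j1 != z by apply: neq_val; rewrite hz h1.
move=> i; case: (eqVneq i z) => [->|iz].
  have [k /andP [kz kj1]] := third hz h1 h2 j1z.
  exists (Fp z j1); rewrite (gF hz h1).
  suff -> : g (flip (Fp z j1) z) by [].
  apply: (gT_le hz (i := k)) => l; rewrite /Tp /flip !ffunE (negbTE kz).
  apply/implyP => /orP [] /eqP ->; rewrite ?eqxx /Fp ?ffunE ?(negbTE j1z) ?eqxx //.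
  by rewrite (negbTE kz) kj1.
exists (Fp z z); rewrite (gF hz h1).
suff -> : g (flip (Fp z z) i) by [].
apply: (gT_le hz (i := i)) => l; rewrite /Tp /flip !ffunE (negbTE iz).
apply/implyP => /orP [] /eqP ->; rewrite ?eqxx /Fp ?ffunE ?eqxx //.
by rewrite eq_sym (negbTE iz).
Qed.

Lemma g_not_lro n (z j1 j2 : 'I_n) (hz : val z = 0) (h1 : val j1 = 1) (h2 : val j2 = 2) :
  ~ lro (@g n).
Proof.
have j1z : j1 != z by apply: neq_val; rewrite hz h1.
have hfalse : forall (i : 'I_n) (b : bool), exists x, lit i b x /\ g x = false.
  move=> i b; case: (eqVneq i z) => [->|iz]; case: b.
  - by exists (Fp z z); rewrite (gF hz h1) /lit /Fp ffunE !eqxx.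
  - by exists (Fp z j1); rewrite (gF hz h1) /lit /Fp ffunE (negbTE j1z) eqxx.
  - have [k /andP [kz ki]] := third hz h1 h2 iz.
    by exists (Fp z k); rewrite (gF hz h1) /lit /Fp ffunE (negbTE kz) iz eq_sym ki.
  - by exists (Fp z i); rewrite (gF hz h1) /lit /Fp ffunE (negbTE iz) eqxx andbF.
have htrue : forall (i : 'I_n) (b : bool), exists x, ~~ lit i b x /\ g x = true.
  move=> i b; case: (eqVneq i z) => [->|iz]; case: b.
  - by exists (Tp z z); rewrite (gT hz) /lit /Tp ffunE !eqxx.
  - by exists (Tp z j1); rewrite (gT hz) /lit /Tp ffunE (negbTE j1z) eqxx.
  - have [k /andP [kz ki]] := third hz h1 h2 iz.
    by exists (Tp z k); rewrite (gT hz) /lit /Tp ffunE (negbTE kz) (negbTE iz) eq_sym (negbTE ki).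
  - by exists (Tp z i); rewrite (gT hz) /lit /Tp ffunE (negbTE iz) eqxx orbT.
case => [[c hc]|[t [_ ht]]].
  have := hc (Fp z z); have := hc (Tp z z); rewrite (gF hz h1) (gT hz).
  by move=> <-.
case: t ht => [i b|i b t'|i b t'] ht.
- have [x [hx gx]] := htrue i b; move: (ht x); rewrite gx /= => e.
  by move: hx; rewrite -e.
- have [x [hx gx]] := hfalse i b; move: (ht x); by rewrite gx /= hx.
- have [x [hx gx]] := htrue i b; move: (ht x); by rewrite gx /= (negbTE hx).
Qed.

Definition phi n (z : 'I_n) (u : 'I_n * bool) : point n :=
  if u.2 then Tp z u.1 else Fp z u.1.

Lemma phi_inj n (z j1 : 'I_n) (hz : val z = 0) (h1 : val j1 = 1) : injective (phi z).
Proof.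
move=> [i b] [i' b']; rewrite /phi /=.
case: b; case: b' => e.
- congr pair.
  have ez := congr1 (fun x : point n => x z) e; have ei := congr1 (fun x : point n => x i) e.
  move: ez ei; rewrite /Tp !ffunE /=.
  case: (eqVneq i z) => [ei|iz]; case: (eqVneq i' z) => [ei'|i'z]; try by subst.
  + by rewrite eqxx.
  + by rewrite !eqxx /= => _; case: eqP.
- by move: (gT hz i) (gF hz h1 i'); rewrite e => ->.
- by move: (gT hz i') (gF hz h1 i); rewrite e => ->.
- congr pair.
  have ez := congr1 (fun x : point n => x z) e; have ei := congr1 (fun x : point n => x i) e.
  move: ez ei; rewrite /Fp !ffunE /=.
  case: (eqVneq i z) => [ei|iz]; case: (eqVneq i' z) => [ei'|i'z]; try by subst.
  + by rewrite !eqxx.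
  + by rewrite !eqxx /= => _; case: eqP.
Qed.

Lemma spec_g n (z j1 j2 : 'I_n) (hz : val z = 0) (h1 : val j1 = 1) (h2 : val j2 = 2) :
  spec_number_eq (@g n) (2 * n).
Proof.
have [thg [thFz [thTz thi]]] := thr_cases hz h1 h2.
have inj := phi_inj hz h1.
have cardphi : #|phi z @: [set: 'I_n * bool]| = 2 * n.
  by rewrite (card_imset _ inj) cardsT card_prod card_ord card_bool mulnC.
split.
  exists (phi z @: [set: 'I_n * bool]); split => //; split => // h hth hag y.
  apply: (suff_spec hz h1 h2 hth) => i.
    rewrite hag ?(gT hz) //; apply/imsetP; by exists (i, true).
  rewrite hag ?(gF hz h1) //; apply/imsetP; by exists (i, false).
move=> S [_ hS]; rewrite -cardphi; apply: subset_leq_card.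
apply/subsetP => p /imsetP [u _ ->]; apply/negPn/negP => nin.
have hth : threshold (hfun (phi z u)).
  clear nin; case: u => i b; rewrite /phi /=.
  case: (eqVneq i z) => [->|iz]; case: b => //; by case: (thi i iz).
have := hS _ hth.
have agree : forall x, x \in S -> hfun (phi z u) x = g x.
  move=> x xS; rewrite /hfun; case: eqP => [e|_]; last by rewrite addbF.
  by move: nin; rewrite -e xS.
move=> /(_ agree (phi z u)); rewrite /hfun eqxx.
by case: (g (phi z u)).
Qed.

Theorem mainTheorem16 (n : nat) (hn : 3 <= n) :
  positive_fun (@g n) /\ threshold (@g n) /\ depends_on_all (@g n) /\
  ~ lro (@g n) /\ spec_number_eq (@g n) (2 * n).
Proof.
have l0 : 0 < n by lia.
have l1 : 1 < n by lia.
have l2 : 2 < n by lia.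
pose z : 'I_n := Ordinal l0.
pose j1 : 'I_n := Ordinal l1.
pose j2 : 'I_n := Ordinal l2.
have hz : val z = 0 by [].
have h1 : val j1 = 1 by [].
have h2 : val j2 = 2 by [].
have [thg _] := thr_cases hz h1 h2.
split; first exact: g_pos hz.
split; first exact: thg.
split; first exact: g_dep hz h1 h2.
split; first exact: g_not_lro hz h1 h2.
exact: spec_g hz h1 h2.
Qed.
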